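(* Let $n\ge 2$, let $a$ be the smallest prime divisor of $n$, and let $q$ be any prime power. Then $$\frac{1}{a}\prod_{\substack{k=1\\ a\nmid k}}^{n-1}(q^n-q^k)\ge q^{n(n-(n/a)-1)},$$ with equality only when $(n,q)=(2,2)$ or $(n,q)=(3,2)$. *)

(* Defs.v *)
From mathcomp Require Import all_boot all_order all_algebra.
Set Implicit Arguments. Unset Strict Implicit. Unset Printing Implicit Defensive.
Import Order.TTheory GRing.Theory Num.Theory.

Definition prime_power (q : nat) : Prop :=
  exists p e : nat, prime p /\ (0 < e)%N /\ q = (p ^ e)%N.

(* Main.v *)
Require Import Defs.
From mathcomp Require Import all_boot all_order all_algebra.
From mathcomp Require Import ring lra zify.
Import Order.TTheory GRing.Theory Num.Theory.
Local Open Scope ring_scope.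
Local Open Scope ring_scope.
Lemma prodL (t : rat) (r : nat) : 0 < t -> t <= 2^-1 -> (0 < r)%N ->
  (1 - t) * (2^-1 + t^+r) <= \prod_(1 <= j < r.+1) (1 - t^+j).
Proof.
move=> t0 th; elim: r => [//|r IH] _.
case: r IH => [_|r IH]; first by rewrite big_nat1 expr1; nra.
rewrite big_nat_recr //=.
have HP := IH isT.
set P := \prod_(_ <= _ < _) _ in HP *.
set y := t ^+ r.+1 in HP *.
have ey : t ^+ r.+2 = y * t by rewrite exprSr.
rewrite ey.
have y0 : 0 < y by rewrite exprn_gt0.
have yt : y <= t.
  have h1 : t ^+ r <= 1 by apply: exprn_ile1; lra.
  have h0 : 0 <= t ^+ r by apply: exprn_ge0; lra.
  rewrite /y exprS; nra.
have h1 : (1 - t) * (2^-1 + y) * (1 - y * t) <= P * (1 - y * t).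
  by apply: ler_wpM2r => //; nra.
have h2 : 2^-1 + y * t <= (2^-1 + y) * (1 - y * t).
  have : 0 <= y * (1 - 3/2 * t - y * t) by apply: mulr_ge0; nra.
  nra.
have h3 : (1 - t) * (2^-1 + y * t) <= (1 - t) * ((2^-1 + y) * (1 - y * t)).
  by apply: ler_wpM2l => //; lra.
by rewrite mulrA in h3; lra.
Qed.

Lemma pow_ge (n q : nat) : (2 <= n)%N -> (2 <= q)%N -> (4 <= n)%N || (3 <= q)%N ->
  (4 * n <= q ^ n)%N.
Proof.
move=> hn hq /orP [h4|h3].
  have : (4 * n <= 2 ^ n)%N.
    elim: n h4 {hn} => [//|n IH]; rewrite leq_eqVlt => /orP [/eqP <- //|].
    rewrite ltnS => hh; have := IH hh; rewrite expnS; lia.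
  move=> h; apply: (leq_trans h); rewrite leq_exp2r //; lia.
have : (4 * n <= 3 ^ n)%N.
  elim: n hn {h3} => [//|n IH]; rewrite leq_eqVlt => /orP [/eqP <- //|].
  rewrite ltnS => hh; have := IH hh; rewrite expnS; lia.
move=> h; apply: (leq_trans h); rewrite leq_exp2r //; lia.
Qed.

Lemma prod_cnt (x : rat) (r : seq nat) (P : pred nat) :
  \prod_(i <- r | P i) x = x ^+ (\sum_(i <- r | P i) 1)%N.
Proof.
elim: r => [|i r IH]; first by rewrite !big_nil.
rewrite !big_cons; case: (P i) => //.
by rewrite IH add1n exprS.
Qed.

Theorem lemma5p6 (n q : nat) (hn : (2 <= n)%N) (hq : prime_power q) :
  let a := pdiv n in
  let lhs : rat := (a%:R)^-1 *
      \prod_(1 <= k < n | ~~ (a %| k)%N) ((q ^ n)%:R - (q ^ k)%:R) in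
  let rhs : rat := (q ^ (n * (n - n %/ a - 1)))%:R in
  rhs <= lhs /\ (lhs = rhs -> (n, q) = (2, 2)%N \/ (n, q) = (3, 2)%N).
Proof.
move=> a lhs rhs.
have q2 : (2 <= q)%N.
  case: hq => p [e [pp [e0 ->]]].
  have p2 := prime_gt1 pp.
  have : (p ^ 1 <= p ^ e)%N by rewrite leq_pexp2l //; lia.
  rewrite expn1; lia.
have [hc|hc] : (((n == 2) || (n == 3)) && (q == 2))%N \/ (((4 <= n) || (3 <= q))%N).
  by lia.
  move: hc => /andP [/orP [/eqP En|/eqP En] /eqP Eq]; subst.
    split; last by left.
    rewrite /lhs /rhs /a; have -> : pdiv 2 = 2%N by []; rewrite unlock /=; by [].
  split; last by right.
  rewrite /lhs /rhs /a; have -> : pdiv 3 = 3%N by []; rewrite unlock /=; by [].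
have pa : prime a by apply: pdiv_prime; lia.
have a2 : (2 <= a)%N by apply: prime_gt1.
have aln : (a <= n)%N by apply: pdiv_leq; lia.
have adn : (a %| n)%N by apply: pdiv_dvd.
set m := (n %/ a)%N.
have nma : n = (m * a)%N by rewrite /m divnK.
have m1 : (1 <= m)%N by rewrite /m divn_gt0 //; lia.
have mn : (m < n)%N by apply: ltn_Pdiv; lia.
set Q : rat := q%:R.
have Q2 : 2 <= Q by rewrite /Q (ler_nat _ 2 q).
have Q0 : Q != 0 by rewrite gt_eqF //; lra.
set t := Q^-1.
have t0 : 0 < t by rewrite /t invr_gt0; lra.
have th : t <= 2^-1 by rewrite /t lef_pV2 ?posrE //; lra.
have cnt : (\sum_(1 <= k < n | ~~ (a %| k)) 1 = n - m)%N.
  have h1 : (\sum_(1 <= k < n) 1 = n - 1)%N by rewrite sum_nat_const_nat muln1.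
  rewrite (bigID (fun k => a %| k)%N) /= in h1.
  have h2 : (\sum_(1 <= k < n | a %| k) 1 = m - 1)%N.
    have := divn_count_dvd a n; rewrite -/m big_nat_recr /=; last by lia.
    rewrite adn addn1 => ->.
    rewrite big_mkcond /= subn1 /=; apply: eq_bigr => k _; by case: (a %| k)%N.
  rewrite h2 in h1; lia.
set Pk := \prod_(1 <= k < n | ~~ (a %| k)%N) (1 - t ^+ (n - k)).
have Elhs : lhs = (a%:R)^-1 * (Q ^+ (n * (n - m)) * Pk).
  rewrite /lhs; congr (_ * _).
  have -> : Q ^+ (n * (n - m)) = \prod_(1 <= k < n | ~~ (a %| k)%N) Q ^+ n.
    by rewrite -cnt exprM prod_cnt.
  rewrite /Pk -big_split /= big_nat_cond [in RHS]big_nat_cond.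
  apply: eq_bigr => k /andP [/andP [_ kn] _].
  rewrite /Q !natrX mulrBr mulr1; congr (_ - _).
  have -> : n = (k + (n - k))%N by lia.
  rewrite addKn exprD /t exprVn -mulrA mulfV ?mulr1 //.
  by rewrite expf_neq0.
have Pall : (1 - t) * (2^-1 + t ^+ n.-1) <= Pk.
  have L := @prodL t n.-1 t0 th.
  rewrite prednK in L; last by lia.
  have L1 : (0 < n.-1)%N by lia.
  apply: le_trans (L L1) _.
  have -> : \prod_(1 <= j < n) (1 - t ^+ j) = \prod_(1 <= k < n) (1 - t ^+ (n - k)).
    rewrite big_nat_rev /=; apply: eq_big_nat => k /andP [k1 kn].
    congr (1 - t ^+ _); lia.
  rewrite /Pk [X in _ <= X]big_mkcond /=.
  apply: ler_prod => k _.
  have h1 : t ^+ (n - k) <= 1 by apply: exprn_ile1; lra.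
  have h0 : 0 <= t ^+ (n - k) by apply: exprn_ge0; lra.
  case: (a %| k)%N => /=; apply/andP; split; lra.
have tn : 0 < t ^+ n.-1 by apply: exprn_gt0.
have Pk4 : 4^-1 < Pk by nra.
have Qn : 4 * (a%:R) <= Q ^+ n.
  rewrite /Q -natrX -(natrM _ 4 a) ler_nat.
  have PG := pow_ge n q hn q2 hc; lia.
have rp : 0 < rhs by rewrite /rhs ltr0n expn_gt0; lia.
have E2 : Q ^+ (n * (n - m)) = rhs * Q ^+ n.
  rewrite /rhs natrX -/Q -exprD; congr (_ ^+ _); rewrite -/m.
  have -> : (n - m = (n - m - 1) + 1)%N by lia.
  by rewrite addnK mulnDr muln1.
have A0 : 0 < (a%:R : rat) by rewrite ltr0n; lia.
have key : rhs < lhs.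
  rewrite Elhs E2 ltr_pdivlMl //.
  have h : a%:R < Q ^+ n * Pk by nra.
  have : 0 < rhs * (Q ^+ n * Pk - a%:R) by apply: mulr_gt0 => //; lra.
  nra.
split; first exact: ltW.
by move=> E; rewrite E ltxx in key.
Qed.
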